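(* Let $\Bbbk$ be an algebraically closed field of characteristic $2$ and let $\mathfrak{u}(\mathfrak{m})$ be the Hopf algebra generated by $a,b,c$ with relations $ab+ba=c$, $ac+ca=a$, $bc+cb=b$, $a^4=b^4=0$, $c^2+c=0$ and $a,b,c$ primitive. If $0\to V_0\to U\to V_1\to 0$ is an exact sequence of $\mathfrak{u}(\mathfrak{m})$-modules, then $U\simeq V_{\vartheta,\lambda,\mu}^*$ for some $\vartheta,\lambda,\mu\in\Bbbk$. Moreover $\dim\operatorname{Ext}^1_{\mathfrak{u}(\mathfrak{m})}(V_1,V_0)=2$.
   Context: $V_0$ is the one-dimensional module on which $a,b,c$ act by $0$. $V_1$ is the three-dimensional module with basis $v_1,v_2,v_3$ and action $av_1=v_2$, $av_2=v_3$, $av_3=0$; $bv_1=0$, $bv_2=v_1$, $bv_3=v_2$; $cv_1=v_1$, $cv_2=0$, $cv_3=v_3$. For $\vartheta,\lambda,\mu\in\Bbbk$, $V_{\vartheta,\lambda,\mu}$ is $\Bbbk^4$ with standard basis $e_1,\dots,e_4$ and action $ae_1=\vartheta e_2$, $ae_2=e_3$, $ae_3=e_4$, $ae_4=0$; $be_1=\lambda e_3+\mu e_4$, $be_2=0$, $be_3=e_2$, $be_4=e_3$; $ce_1=\lambda e_4$, $ce_2=e_2$, $ce_3=0$, $ce_4=e_4$. For a module $M$, $M^*$ is the linear dual with action $(x\cdot\alpha)(m)=\alpha(S(x)m)$, $S$ the antipode. *)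

(* Defs.v *)
From HB Require Import structures.
From mathcomp Require Import all_boot all_order all_algebra.
Set Implicit Arguments. Unset Strict Implicit. Unset Printing Implicit Defensive.
Import GRing.Theory.
Local Open Scope ring_scope.

(* A finite-dimensional (left) module over u(m) of dimension n: the matrices
   (acting on column vectors) of the three generators a, b, c. *)
Record umod (F : fieldType) (n : nat) := UMod {
  ma : 'M[F]_n; mb : 'M[F]_n; mc : 'M[F]_n }.

Definition is_umod (F : fieldType) n (M : umod F n) : Prop :=
  [/\ ma M *m mb M + mb M *m ma M = mc M,
      ma M *m mc M + mc M *m ma M = ma M,
      mb M *m mc M + mc M *m mb M = mb M,
      ma M *m ma M *m ma M *m ma M = 0 &
      mb M *m mb M *m mb M *m mb M = 0 /\
      mc M *m mc M + mc M = 0].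

Definition is_umod_hom (F : fieldType) m n (M : umod F m) (N : umod F n)
  (f : 'M[F]_(n, m)) : Prop :=
  [/\ f *m ma M = ma N *m f, f *m mb M = mb N *m f & f *m mc M = mc N *m f].

Definition umod_iso (F : fieldType) m n (M : umod F m) (N : umod F n) : Prop :=
  exists (f : 'M[F]_(n, m)) (g : 'M[F]_(m, n)),
    [/\ is_umod_hom M N f, f *m g = 1%:M & g *m f = 1%:M].

(* Dual module: (x.alpha)(v) = alpha(S(x) v) with S(x) = -x for the primitive
   generators; in the dual basis the matrix of x is -(X^T). *)
Definition udual (F : fieldType) n (M : umod F n) : umod F n :=
  UMod (- (ma M)^T) (- (mb M)^T) (- (mc M)^T).

(* Elementary matrix units, 1-indexed as in the paper: E i j has a 1 in row i,
   column j, so that E i j sends basis vector j to basis vector i. *)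
Definition E (F : fieldType) n (i j : nat) : 'M[F]_n.+1 :=
  delta_mx (inord i.-1) (inord j.-1).

Definition V0 (F : fieldType) : umod F 1 := UMod 0 0 0.

(* V_1: a v1 = v2, a v2 = v3, a v3 = 0; b v1 = 0, b v2 = v1, b v3 = v2;
   c v1 = v1, c v2 = 0, c v3 = v3. *)
Definition V1 (F : fieldType) : umod F 3 :=
  UMod (E F 2 2 1 + E F 2 3 2)
       (E F 2 1 2 + E F 2 2 3)
       (E F 2 1 1 + E F 2 3 3).

(* V_{theta,lambda,mu}:
   a e1 = th e2, a e2 = e3, a e3 = e4, a e4 = 0;
   b e1 = la e3 + mu e4, b e2 = 0, b e3 = e2, b e4 = e3;
   c e1 = la e4, c e2 = e2, c e3 = 0, c e4 = e4. *)
Definition Vtlm (F : fieldType) (th la mu : F) : umod F 4 :=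
  UMod (th *: E F 3 2 1 + E F 3 3 2 + E F 3 4 3)
       (la *: E F 3 3 1 + mu *: E F 3 4 1 + E F 3 2 3 + E F 3 3 4)
       (la *: E F 3 4 1 + E F 3 2 2 + E F 3 4 4).

(* Ext^1(M, N) via cocycles: an extension 0 -> N -> X -> M -> 0 can be taken on
   the vector space N (+) M with block upper triangular action; the
   off-diagonal blocks (fa, fb, fc) are the 1-cocycles, and cocycles coming
   from a change of splitting g : M -> N are the coboundaries. *)
Definition ext_mod (F : fieldType) n m (N : umod F n) (M : umod F m)
  (fa fb fc : 'M[F]_(n, m)) : umod F (n + m) :=
  UMod (block_mx (ma N) fa 0 (ma M))
       (block_mx (mb N) fb 0 (mb M))
       (block_mx (mc N) fc 0 (mc M)).

Definition is_cocycle (F : fieldType) n m (N : umod F n) (M : umod F m)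
  (fa fb fc : 'M[F]_(n, m)) : Prop := is_umod (ext_mod N M fa fb fc).

Definition is_coboundary (F : fieldType) n m (N : umod F n) (M : umod F m)
  (fa fb fc : 'M[F]_(n, m)) : Prop :=
  exists g : 'M[F]_(n, m),
    [/\ fa = ma N *m g - g *m ma M, fb = mb N *m g - g *m mb M &
        fc = mc N *m g - g *m mc M].

(* dim Ext^1(M, N) = d : there are d cocycles whose classes form a basis of
   the quotient space (cocycles)/(coboundaries). *)
Definition dim_Ext1_eq (F : fieldType) n m (M : umod F m) (N : umod F n)
  (d : nat) : Prop :=
  exists za zb zc : 'I_d -> 'M[F]_(n, m),
    [/\ forall i, is_cocycle N M (za i) (zb i) (zc i),
        forall fa fb fc, is_cocycle N M fa fb fc ->
          exists s : 'I_d -> F,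
            is_coboundary N M (fa - \sum_i s i *: za i)
                              (fb - \sum_i s i *: zb i)
                              (fc - \sum_i s i *: zc i) &
        forall s : 'I_d -> F,
          is_coboundary N M (\sum_i s i *: za i) (\sum_i s i *: zb i)
                            (\sum_i s i *: zc i) ->
          forall i, s i = 0].

(* Main.v *)
Require Import Defs.
From HB Require Import structures.
From mathcomp Require Import all_boot all_order all_algebra.
From mathcomp Require Import ring.
Set Implicit Arguments. Unset Strict Implicit. Unset Printing Implicit Defensive.
Import GRing.Theory.
Local Open Scope ring_scope.

Lemma inord_eqE n a b : (a <= n)%N -> (b <= n)%N -> (inord a == inord b :> 'I_n.+1) = (a == b).
Proof. by move=> ha hb; rewrite -val_eqE /= !inordK. Qed.

Lemma sum3 (V : nmodType) (G : 'I_3 -> V) : \sum_(k < 3) G k = G (inord 0) + G (inord 1) + G (inord 2).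
Proof.
rewrite !big_ord_recl big_ord0 addr0 !addrA.
by congr (G _ + G _ + G _); apply/val_inj; rewrite /= inordK.
Qed.
Lemma sum4 (V : nmodType) (G : 'I_4 -> V) : \sum_(k < 4) G k = G (inord 0) + G (inord 1) + G (inord 2) + G (inord 3).
Proof.
rewrite !big_ord_recl big_ord0 addr0 !addrA.
by congr (G _ + G _ + G _ + G _); apply/val_inj; rewrite /= inordK.
Qed.
Lemma ord3P (P : 'I_3 -> Prop) : P (inord 0) -> P (inord 1) -> P (inord 2) -> forall j, P j.
Proof. move=> h0 h1 h2 j; have: j = inord (val j) by rewrite inord_val.
by case: j => [[|[|[|k]]] Hj] //= ->. Qed.
Lemma ord4P (P : 'I_4 -> Prop) : P (inord 0) -> P (inord 1) -> P (inord 2) -> P (inord 3) -> forall j, P j.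
Proof. move=> h0 h1 h2 h3 j; have: j = inord (val j) by rewrite inord_val.
by case: j => [[|[|[|[|k]]]] Hj] //= ->. Qed.

Lemma sum2 (V : nmodType) (G : 'I_2 -> V) : \sum_(k < 2) G k = G (inord 0) + G (inord 1).
Proof.
rewrite !big_ord_recl big_ord0 addr0.
by congr (G _ + G _); apply/val_inj; rewrite /= inordK.
Qed.
Lemma ord2P (P : 'I_2 -> Prop) : P (inord 0) -> P (inord 1) -> forall j, P j.
Proof. move=> h0 h1 j; have: j = inord (val j) by rewrite inord_val.
by case: j => [[|[|k]] Hj] //= ->. Qed.

Section S.
Variable F : fieldType.
Hypothesis pchar2 : 2 \in [pchar F].

Lemma two0 : (1 + 1 : F) = 0.
Proof. by have := pcharf0 pchar2; rewrite mulr2n. Qed.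
Lemma oppF (x : F) : - x = x.
Proof. apply/eqP; rewrite eq_sym -addr_eq0 -mulr2n -mulr_natr. by rewrite (pcharf0 pchar2) mulr0. Qed.
Lemma addxx (x : F) : x + x = 0.
Proof. by rewrite -{2}(oppF x) subrr. Qed.
Lemma oppM m n (M : 'M[F]_(m,n)) : - M = M.
Proof. by apply/matrixP => r c; rewrite mxE oppF. Qed.

Definition row3 (x y z : F) : 'M[F]_(1,3) := \row_(j < 3) nth 0 [:: x; y; z] j.

Lemma row3E (f : 'M[F]_(1,3)) : f = row3 (f 0 (inord 0)) (f 0 (inord 1)) (f 0 (inord 2)).
Proof. apply/rowP; apply: ord3P; by rewrite mxE inordK // ord1. Qed.

Ltac crunch := rewrite ?(mxE, sum3, sum4) /= /E ?mxE ?inordK // ?inord_eqE //= ?mxE;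
  rewrite ?(addr0, add0r, mulr0, mul0r, mulr1, mul1r, subr0, sub0r, oppr0).

Lemma row3_a x y z : row3 x y z *m ma (V1 F) = row3 y z 0.
Proof. by apply/rowP; apply: ord3P; crunch. Qed.
Lemma row3_b x y z : row3 x y z *m mb (V1 F) = row3 0 x y.
Proof. by apply/rowP; apply: ord3P; crunch. Qed.
Lemma row3_c x y z : row3 x y z *m mc (V1 F) = row3 x 0 z.
Proof. by apply/rowP; apply: ord3P; crunch. Qed.
Lemma row3D x y z x' y' z' : row3 x y z + row3 x' y' z' = row3 (x + x') (y + y') (z + z').
Proof. by apply/rowP; apply: ord3P; crunch. Qed.
Lemma row3Z k x y z : k *: row3 x y z = row3 (k * x) (k * y) (k * z).
Proof. by apply/rowP; apply: ord3P; crunch. Qed.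
Lemma row3N x y z : - row3 x y z = row3 (- x) (- y) (- z).
Proof. by apply/rowP; apply: ord3P; crunch. Qed.
Lemma row30 : 0 = row3 0 0 0.
Proof. by apply/rowP; apply: ord3P; crunch. Qed.
Lemma row3_inj x y z x' y' z' : row3 x y z = row3 x' y' z' -> [/\ x = x', y = y' & z = z'].
Proof.
move=> h; have h0 := congr1 (fun f : 'M[F]_(1,3) => f 0 (inord 0)) h;
have h1 := congr1 (fun f : 'M[F]_(1,3) => f 0 (inord 1)) h; have h2 := congr1 (fun f : 'M[F]_(1,3) => f 0 (inord 2)) h.
by move: h0 h1 h2; crunch.
Qed.


Lemma rowV1 :
  [/\ row (inord 0) (ma (V1 F)) = row3 0 0 0, row (inord 1) (ma (V1 F)) = row3 1 0 0,
      row (inord 2) (ma (V1 F)) = row3 0 1 0,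
      row (inord 0) (mb (V1 F)) = row3 0 1 0 &
   [/\ row (inord 1) (mb (V1 F)) = row3 0 0 1,  row (inord 2) (mb (V1 F)) = row3 0 0 0,
      row (inord 0) (mc (V1 F)) = row3 1 0 0, row (inord 1) (mc (V1 F)) = row3 0 0 0 &
      row (inord 2) (mc (V1 F)) = row3 0 0 1]].
Proof. by split; try split; apply/rowP; apply: ord3P; crunch. Qed.

Lemma rowDl m n (i : 'I_m) (A B : 'M[F]_(m,n)) : row i (A + B) = row i A + row i B.
Proof. exact: linearD. Qed.

Lemma V1_umod : is_umod (V1 F).
Proof.
have [r1 r2 r3 r4 [r5 r6 r7 r8 r9]] := rowV1.
split; try split; apply/row_matrixP; apply: ord3P;
  do ![rewrite r1|rewrite r2|rewrite r3|rewrite r4|rewrite r5|rewrite r6|rewrite r7|rewrite r8|rewrite r9|rewrite row_mul|rewrite rowDl|rewrite row0];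
  rewrite ?(row3_a, row3_b, row3_c, row3D);
  rewrite ?(addr0, add0r, two0, addxx) -?row30 //.
Qed.

Lemma ext_umod (M : umod F 3) fa fb fc : is_umod M ->
  fa *m mb M + fb *m ma M = fc ->
  fa *m mc M + fc *m ma M = fa ->
  fb *m mc M + fc *m mb M = fb ->
  fa *m ma M *m ma M *m ma M = 0 ->
  fb *m mb M *m mb M *m mb M = 0 ->
  fc *m mc M + fc = 0 ->
  is_cocycle (V0 F) M fa fb fc.
Proof.
move=> [v1 v2 v3 v4 [v5 v6]] h1 h2 h3 h4 h5 h6.
rewrite /is_cocycle /is_umod /ext_mod /=.
rewrite !mulmx_block !add_block_mx !(mul0mx, mulmx0, addr0, add0r).
by rewrite h1 h2 h3 h4 h5 h6 v1 v2 v3 v4 v5 v6 block_mx0.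
Qed.

Lemma cocycle_eqs (M : umod F 3) fa fb fc : is_cocycle (V0 F) M fa fb fc ->
  [/\ fa *m mb M + fb *m ma M = fc,
  fa *m mc M + fc *m ma M = fa,
  fb *m mc M + fc *m mb M = fb &
  fc *m mc M + fc = 0].
Proof.
rewrite /is_cocycle /is_umod /ext_mod /=.
rewrite !mulmx_block !add_block_mx !(mul0mx, mulmx0, addr0, add0r).
move=> [/eq_block_mx[_ h1 _ _] /eq_block_mx[_ h2 _ _] /eq_block_mx[_ h3 _ _] _ [_]].
rewrite -block_mx0 => /eq_block_mx[_ h6 _ _].
by split.
Qed.


Lemma V0a : ma (V0 F) = 0. Proof. by []. Qed.
Lemma V0b : mb (V0 F) = 0. Proof. by []. Qed.
Lemma V0c : mc (V0 F) = 0. Proof. by []. Qed.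

Lemma ext_dim : dim_Ext1_eq (V1 F) (V0 F) 2.
Proof.
pose za := fun i : 'I_2 => if nat_of_ord i == 0%N then row3 0 0 1 else row3 0 0 0.
pose zb := fun i : 'I_2 => if nat_of_ord i == 0%N then row3 0 0 0 else row3 1 0 0.
pose zc := fun i : 'I_2 => row3 0 0 0.
exists za, zb, zc; split.
- apply: ord2P; rewrite /za /zb /zc; cbv beta; rewrite ?inordK //=; apply: ext_umod V1_umod _ _ _ _ _ _;
  by rewrite ?(row3_a, row3_b, row3_c, row3D) ?(addr0, add0r) -?row30.
- move=> fa fb fc /cocycle_eqs[h1 h2 h3 _].
  rewrite (row3E fa) (row3E fb) (row3E fc) in h1 h2 h3 *.
  move: (fa 0 (inord 0)) (fa 0 (inord 1)) (fa 0 (inord 2)) (fb 0 (inord 0)) (fb 0 (inord 1)) (fb 0 (inord 2)) (fc 0 (inord 0)) (fc 0 (inord 1)) (fc 0 (inord 2)) h1 h2 h3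
    => x0 x1 x2 y0 y1 y2 z0 z1 z2 h1 h2 h3.
  move: h1 h2 h3; rewrite !(row3_a, row3_b, row3_c, row3D).
  move=> /row3_inj[e1 e2 e3] /row3_inj[e4 e5 e6] /row3_inj[e7 e8 e9].
  exists (fun i : 'I_2 => if nat_of_ord i == 0%N then x2 else y0).
  rewrite !sum2 /za /zb /zc; cbv beta; rewrite ?inordK //=.
  exists (row3 y1 x0 x1); rewrite ?V0a ?V0b ?V0c !mul0mx !sub0r !oppM
    !(row3_a, row3_b, row3_c, row3Z, row3N, row3D).
  have hz1 : z1 = 0 by apply: (addrI x0); rewrite addr0.
  have hy2 : y2 = x0 by apply: (addrI x0); rewrite e2 hz1 addxx.
  rewrite add0r in e1; rewrite addr0 in e3.
  rewrite !(mulr0, mulr1, addr0, add0r) !addxx -e1 -e3 hz1 hy2.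
  by split.
- move=> s [g [ha hb hc]].
  move: ha hb; rewrite !sum2 /za /zb /zc; cbv beta; rewrite ?inordK //= (row3E g) ?V0a ?V0b !mul0mx !sub0r
    !(row3_a, row3_b, row3_c, row3Z, row3N, row3D).
  move=> /row3_inj[_ _ h0] /row3_inj[h1 _ _].
  move: h0 h1; rewrite !(mulr0, mulr1, addr0, add0r, oppr0) => h0 h1.
  by apply: ord2P.
Qed.

Definition col3 (x y z : F) : 'cV[F]_3 := \col_(j < 3) nth 0 [:: x; y; z] j.
Lemma col3E (f : 'cV[F]_3) : f = col3 (f (inord 0) 0) (f (inord 1) 0) (f (inord 2) 0).
Proof. apply/colP; apply: ord3P; by rewrite mxE inordK // ord1. Qed.
Lemma col3_a x y z : ma (V1 F) *m col3 x y z = col3 0 x y.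
Proof. by apply/colP; apply: ord3P; crunch. Qed.
Lemma col3_b x y z : mb (V1 F) *m col3 x y z = col3 y z 0.
Proof. by apply/colP; apply: ord3P; crunch. Qed.
Lemma col3_c x y z : mc (V1 F) *m col3 x y z = col3 x 0 z.
Proof. by apply/colP; apply: ord3P; crunch. Qed.
Lemma col3D x y z x' y' z' : col3 x y z + col3 x' y' z' = col3 (x + x') (y + y') (z + z').
Proof. by apply/colP; apply: ord3P; crunch. Qed.
Lemma col3Z k x y z : k *: col3 x y z = col3 (k * x) (k * y) (k * z).
Proof. by apply/colP; apply: ord3P; crunch. Qed.
Lemma col3N x y z : - col3 x y z = col3 (- x) (- y) (- z).
Proof. by apply/colP; apply: ord3P; crunch. Qed.
Lemma col30 : 0 = col3 0 0 0.
Proof. by apply/colP; apply: ord3P; crunch. Qed.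
Lemma col3_inj x y z x' y' z' : col3 x y z = col3 x' y' z' -> [/\ x = x', y = y' & z = z'].
Proof.
move=> h; have h0 := congr1 (fun f : 'cV[F]_3 => f (inord 0) 0) h;
have h1 := congr1 (fun f : 'cV[F]_3 => f (inord 1) 0) h; have h2 := congr1 (fun f : 'cV[F]_3 => f (inord 2) 0) h.
by move: h0 h1 h2; crunch.
Qed.

Definition g4 m (w x y z : 'cV[F]_m) : 'M[F]_(m, 4) :=
  \matrix_(r < m, j < 4) (nth 0 [:: w; x; y; z] j) r 0.

Lemma mul_g4 k m (A : 'M[F]_(k, m)) w x y z :
  A *m g4 w x y z = g4 (A *m w) (A *m x) (A *m y) (A *m z).
Proof.
apply/matrixP => r; apply: ord4P; rewrite !mxE inordK //= [RHS]mxE; apply: eq_bigr => l _;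
  by rewrite mxE inordK.
Qed.

Lemma g4_mulc m (w x y z : 'cV[F]_m) (c : 'cV[F]_4) :
  g4 w x y z *m c = c (inord 0) 0 *: w + c (inord 1) 0 *: x + c (inord 2) 0 *: y + c (inord 3) 0 *: z.
Proof. apply/matrixP => r l; rewrite ord1; crunch. by rewrite (mulrC (w r 0)) (mulrC (x r 0)) (mulrC (y r 0)) (mulrC (z r 0)). Qed.

Lemma g4_aD th la mu m (w x y z : 'cV[F]_m) :
  g4 w x y z *m ma (udual (Vtlm th la mu)) = g4 0 (- (th *: w)) (- x) (- y).
Proof. by apply/matrixP => r; apply: ord4P; crunch; ring. Qed.
Lemma g4_bD th la mu m (w x y z : 'cV[F]_m) :
  g4 w x y z *m mb (udual (Vtlm th la mu)) = g4 0 (- y) (- (la *: w) - z) (- (mu *: w)).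
Proof. by apply/matrixP => r; apply: ord4P; crunch; ring. Qed.
Lemma g4_cD th la mu m (w x y z : 'cV[F]_m) :
  g4 w x y z *m mc (udual (Vtlm th la mu)) = g4 0 (- x) 0 (- (la *: w) - z).
Proof. by apply/matrixP => r; apply: ord4P; crunch; ring. Qed.

Lemma addMM m n (M : 'M[F]_(m,n)) : M + M = 0.
Proof. by rewrite -{2}(oppM M) subrr. Qed.

Lemma part1 (n : nat) (U : umod F n) (i : 'M[F]_(n, 1)) (p : 'M[F]_(3, n)) :
     is_umod U ->
     is_umod_hom (V0 F) U i ->
     is_umod_hom U (V1 F) p ->
     (forall w : 'cV[F]_1, i *m w = 0 -> w = 0) ->
     (forall v : 'cV[F]_n, p *m v = 0 <-> exists w : 'cV[F]_1, v = i *m w) ->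
     (forall u : 'cV[F]_3, exists v : 'cV[F]_n, p *m v = u) ->
     exists th la mu : F, umod_iso U (udual (Vtlm th la mu)).
Proof.
move=> [hU1 hU2 hU3 hU4 [hU5 hU6]] [hi1 hi2 hi3] [hp1 hp2 hp3] hinj hex hsurj.
have Ai : ma U *m i = 0 by rewrite -hi1 V0a mulmx0.
have Bi : mb U *m i = 0 by rewrite -hi2 V0b mulmx0.
have Ci : mc U *m i = 0 by rewrite -hi3 V0c mulmx0.
have pi : p *m i = 0 by apply/(hex i).2; exists 1%:M; rewrite mulmx1.
have ker v : p *m v = 0 -> exists k : F, v = k *: i.
  by move/(hex v).1 => [w ->]; exists (w 0 0); rewrite {1}(mx11_scalar w) mul_mx_scalar.
have iinj k : k *: i = 0 -> k = 0.
  move=> h; have := hinj (k%:M); rewrite mul_mx_scalar => /(_ h) /matrixP /(_ 0 0).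
  by rewrite !mxE /= mulr1n.
have [u1 pu1] := hsurj (col3 1 0 0).
set A := ma U in hU1 hU2 hU4 hp1 Ai *; set B := mb U in hU1 hU3 hU5 hp2 Bi *;
set C := mc U in hU1 hU2 hU3 hU6 hp3 Ci *.
pose v2 := A *m u1; pose v3 := A *m v2.
have pv2 : p *m v2 = col3 0 1 0 by rewrite /v2 mulmxA hp1 -mulmxA pu1 col3_a.
have pv3 : p *m v3 = col3 0 0 1 by rewrite /v3 mulmxA hp1 -mulmxA pv2 col3_a.
have [th hth] : exists th, A *m v3 = th *: i.
  by apply: ker; rewrite mulmxA hp1 -mulmxA pv3 col3_a -col30.
have [mu hmu] : exists mu, B *m u1 = mu *: i.
  by apply: ker; rewrite mulmxA hp2 -mulmxA pu1 col3_b -col30.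
have [la hla0] : exists la, B *m v2 - u1 = la *: i.
  by apply: ker; rewrite mulmxBr mulmxA hp2 -mulmxA pv2 pu1 col3_b subrr.
have hla : B *m v2 = la *: i + u1 by rewrite -hla0 subrK.
have [nu hnu0] : exists nu, B *m v3 - v2 = nu *: i.
  by apply: ker; rewrite mulmxBr mulmxA hp2 -mulmxA pv3 pv2 col3_b subrr.
have hnu : B *m v3 = nu *: i + v2 by rewrite -hnu0 subrK.
have hCu1 : C *m u1 = la *: i + u1.
  by rewrite -hU1 mulmxDl -!mulmxA hmu -/v2 hla -scalemxAr Ai scaler0 add0r.
have hCv2 : C *m v2 = 0.
  have h : (A *m C + C *m A) *m u1 = A *m u1 by rewrite hU2.
  move: h; rewrite mulmxDl -!mulmxA hCu1 mulmxDr -scalemxAr Ai scaler0 add0r -/v2 => h.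
  by apply: (addrI v2); rewrite addr0.
have hnu_eq : nu = 0.
  apply: iinj.
  have h : C *m v2 = nu *: i + (v2 + v2).
    rewrite -hU1 mulmxDl -!mulmxA hla mulmxDr -scalemxAr Ai scaler0 add0r -/v2 -/v3 hnu.
    by rewrite addrCA.
  by move: h; rewrite hCv2 addMM addr0 => <-.
have hBv3 : B *m v3 = v2 by rewrite hnu hnu_eq scale0r add0r.
have hCv3 : C *m v3 = v3.
  have h : (A *m C + C *m A) *m v2 = A *m v2 by rewrite hU2.
  by move: h; rewrite mulmxDl -!mulmxA hCv2 mulmx0 add0r -/v3.
pose g := g4 i v3 v2 u1.
have hA : A *m g = g *m ma (udual (Vtlm th la mu)).
  by rewrite mul_g4 g4_aD Ai hth -/v3 -/v2 !oppM.
have hB : B *m g = g *m mb (udual (Vtlm th la mu)).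
  by rewrite mul_g4 g4_bD Bi hBv3 hla hmu !oppM.
have hC : C *m g = g *m mc (udual (Vtlm th la mu)).
  by rewrite mul_g4 g4_cD Ci hCv3 hCv2 hCu1 !oppM.
have pg : p *m g = g4 0 (col3 0 0 1) (col3 0 1 0) (col3 1 0 0) by rewrite mul_g4 pi pv3 pv2 pu1.
have ginj (c : 'cV[F]_4) : g *m c = 0 -> c = 0.
  move=> h; have := congr1 (mulmx p) h.
  rewrite mulmxA pg g4_mulc mulmx0 scaler0 add0r !col3Z !col3D !(mulr0, mulr1, addr0, add0r).
  rewrite col30 => /col3_inj [h3 h2 h1].
  move: h; rewrite /g g4_mulc h1 h2 h3 !scale0r !addr0 => /iinj h0.
  apply/matrixP => k l; rewrite ord1 [RHS]mxE; move: k; exact: ord4P.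
have gsurj (v : 'cV[F]_n) : exists c, g *m c = v.
  pose x0 := (p *m v) (inord 0) 0; pose x1 := (p *m v) (inord 1) 0;
  pose x2 := (p *m v) (inord 2) 0.
  have [k hk] : exists k, v - (x2 *: v3 + x1 *: v2 + x0 *: u1) = k *: i.
    apply: ker; rewrite mulmxBr !mulmxDr -!scalemxAr pu1 pv2 pv3 !col3Z !col3D.
    rewrite {1}(col3E (p *m v)) !(mulr0, mulr1, addr0, add0r).
    by apply/eqP; rewrite subr_eq0.
  exists (\col_(j < 4) nth 0 [:: k; x2; x1; x0] j).
  rewrite /g g4_mulc !mxE !inordK //=.
  by rewrite -[v](subrK (x2 *: v3 + x1 *: v2 + x0 *: u1)) hk !addrA.
have rfree : row_free (g^T).
  rewrite -kermx_eq0; apply/eqP/row_matrixP => r; rewrite row0.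
  apply: trmx_inj; rewrite trmx0; apply: ginj.
  move: (congr1 (row r) (mulmx_ker (g^T))); rewrite row_mul row0 => /(congr1 trmx).
  by rewrite trmx_mul trmxK trmx0.
have rfull : row_full (g^T).
  rewrite -sub1mx; apply/row_subP => r; apply/submxP.
  have [c hc] := gsurj (row r 1%:M)^T.
  by exists c^T; rewrite -trmx_mul hc trmxK.
have hn : 4%N = n by move: (eqP rfree) (eqP rfull) => ->.
subst n.
have gu : g \in unitmx by rewrite -unitmx_tr -row_free_unit.
have homP (X Y : 'M[F]_4) : X *m g = g *m Y -> invmx g *m X = Y *m invmx g.
  move=> h; rewrite -[LHS]mulmx1 -(mulmxV gu) mulmxA -(mulmxA (invmx g)) h.
  by rewrite mulmxA mulVmx // mul1mx.
exists th, la, mu, (invmx g), g; split; [split | exact: mulVmx | exact: mulmxV].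
- exact: homP.
- exact: homP.
- exact: homP.
Qed.
End S.

Unset Implicit Arguments.

Theorem lemma3p7 (F : closedFieldType) (pchar2 : 2 \in [pchar F]) :
  (forall (n : nat) (U : umod F n) (i : 'M[F]_(n, 1)) (p : 'M[F]_(3, n)),
     is_umod U ->
     is_umod_hom (V0 F) U i ->
     is_umod_hom U (V1 F) p ->
     (forall w : 'cV[F]_1, i *m w = 0 -> w = 0) ->
     (forall v : 'cV[F]_n, p *m v = 0 <-> exists w : 'cV[F]_1, v = i *m w) ->
     (forall u : 'cV[F]_3, exists v : 'cV[F]_n, p *m v = u) ->
     exists th la mu : F, umod_iso U (udual (Vtlm th la mu)))
  /\ dim_Ext1_eq (V1 F) (V0 F) 2.
Proof.
split; [move=> n U i p; exact: part1 | exact: ext_dim].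
Qed.
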